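(* Consider a single positioning infrastructure with $N_{\text{anc}}$ anchors providing ranging information, of which $N_{\text{adv}}$ are manipulated by an uncoordinated attacker, and let $N_{\text{min}}$ be the minimum number of anchors required for positioning. Suppose that $N_{\text{anc}}-N_{\text{adv}}\ge N_{\text{min}}$. Then uncoordinated spoofing can be detected, i.e., there is at least one benign subset position estimate, and it is almost surely inconsistent with the spoofed position estimates.
   Context: Idealized model of subset-based integrity monitoring: a platform at unknown true position $\mathbf{p}_{\text{usr}}(t)\in\mathbb{R}^3$ receives ranging measurements from anchors with known positions (e.g., GNSS satellites, for which $N_{\text{min}}=4$). For every subset of anchors of size at least $N_{\text{min}}$, a position estimate is computed by multilateration. Positioning noise and uncertainties are taken to be negligible (zero) while attacker-induced deviations are preserved, and the anchor geometry is good, so every subset consisting only of benign measurements of size at least $N_{\text{min}}$ yields exactly $\mathbf{p}_{\text{usr}}(t)$. ''Uncoordinated spoofing'' means the manipulated ranging values are chosen independently (potentially randomly), so estimates from subsets involving manipulated measurements are random positions. *)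

(* Defs.v *)
From HB Require Import structures.
From mathcomp Require Import all_boot all_order all_algebra.
From mathcomp Require Import all_classical all_reals all_analysis.
Set Implicit Arguments. Unset Strict Implicit. Unset Printing Implicit Defensive.

Definition benign_subset (Nanc : nat) (adv S : {set 'I_Nanc}) : bool :=
  S :&: adv == finset.set0.

Definition usable_subset (Nanc Nmin : nat) (S : {set 'I_Nanc}) : bool :=
  Nmin <= #|S|.

(* Main.v *)
Require Import Defs.
From HB Require Import structures.
From mathcomp Require Import all_boot all_order all_algebra.
From mathcomp Require Import all_classical all_reals all_analysis.
From mathcomp Require Import zify.
Import Order.TTheory GRing.Theory Num.Theory.

Local Open Scope classical_set_scope.
Local Open Scope ring_scope.

Theorem proposition1 (R : realType) (d : measure_display) (Omega : measurableType d)
  (P : probability Omega R) (Nanc Nadv Nmin : nat) (adv : {set 'I_Nanc})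
  (p_usr : 'rV[R]_3) (est : {set 'I_Nanc} -> Omega -> 'rV[R]_3) :
  #|adv| = Nadv ->
  (* idealized model: every usable benign subset yields exactly p_usr *)
  (forall S, usable_subset Nmin S -> benign_subset adv S ->
     forall w, est S w = p_usr) ->
  (* uncoordinated spoofing: estimates of usable subsets involving manipulated
     anchors are random positions whose distribution has no atoms *)
  (forall S, usable_subset Nmin S -> ~~ benign_subset adv S ->
     forall x : 'rV[R]_3,
       measurable [set w | est S w = x] /\ P [set w | est S w = x] = 0%E) ->
  (Nmin <= Nanc - Nadv)%N ->
  exists Sb : {set 'I_Nanc},
    usable_subset Nmin Sb /\ benign_subset adv Sb /\
    P [set w | exists S, usable_subset Nmin S /\ ~~ benign_subset adv S /\
                         est S w = est Sb w] = 0%E.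
Proof.
move=> hcard hben hspoof hN.
have uSb : usable_subset Nmin (~: adv).
  rewrite /usable_subset; have := cardsC adv; rewrite card_ord; lia.
have bSb : benign_subset adv (~: adv) by apply/eqP/setP => x; rewrite !inE; case: (x \in adv).
exists (~: adv); split => //; split => //.
pose cond S := usable_subset Nmin S && ~~ benign_subset adv S.
pose U (s : seq {set 'I_Nanc}) :=
  [set w | exists S, S \in s /\ cond S /\ est S w = p_usr].
have key : forall s, measurable (U s) /\ P (U s) = 0%E.
  elim=> [|a s [mU PU]].
    have -> : U [::] = set0 by apply/seteqP; split => w //= [S [+ _]].
    by split => //; rewrite measure0.
  have -> : U (a :: s) =
      (if cond a then [set w | est a w = p_usr] else set0) `|` U s.
    apply/seteqP; split => w /=.
      move=> [S [+ [cS eS]]]; rewrite inE => /orP [/eqP eSa|Ss].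
        by left; subst S; rewrite cS.
      by right; exists S.
    case=> [|[S [Ss [cS eS]]]].
      case ca: (cond a) => // ea; exists a; split; first by rewrite inE eqxx.
      by [].
    by exists S; split => //; rewrite inE Ss orbT.
  have [mA PA] : measurable (if cond a then [set w | est a w = p_usr] else set0)
     /\ P (if cond a then [set w | est a w = p_usr] else set0) = 0%E.
    case ca: (cond a); last by split => //; rewrite measure0.
    by move/andP: ca => [ua ba]; apply: hspoof.
  split; first exact: measurableU.
  apply/eqP; rewrite eq_le measure_ge0 andbT.
  apply: le_trans (measureU2 P mA mU) _.
  have E1 : forall x y : \bar R, x = 0%E -> y = 0%E -> (x + y <= 0)%E.
    by move=> x y -> ->; rewrite adde0.
  by apply: E1; [exact: PA | exact: PU].
have -> : [set w | exists S, usable_subset Nmin S /\ ~~ benign_subset adv S /\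
                         est S w = est (~: adv) w] = U (enum [set: {set 'I_Nanc}]).
  apply/seteqP; split => w /=.
    move=> [S [uS [bS eS]]]; exists S; split; first by rewrite mem_enum inE.
    by rewrite /cond uS bS; split => //; rewrite eS (hben _ uSb bSb).
  move=> [S [_ [/andP [uS bS] eS]]]; exists S; split => //; split => //.
  by rewrite eS (hben _ uSb bSb).
exact: (key _).2.
Qed.
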